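(* Let $\alpha\in[0,1]$ and $$S=\{(c,\ell)\in[0,1]\times[0,2L] : c\le\alpha,\ \ell\le 2L(1-\alpha)\}.$$ Then $S$ is approachable in the game with payoff $m$: there is a strategy of the learner such that, for every strategy of the opponent, $d(\overline{m}_T,S)\to 0$ almost surely as $T\to\infty$.
   Context: Fix $n\ge1$, $L>0$ and calibration scores $s_{(1)}<\dots<s_{(n)}$ in $[0,L)$, with $s_{(0)}=0$, $s_{(n+1)}=L$. Let $\mathcal{A}=\{k/(n+1):k=0,\dots,n+1\}$ and $\mathcal{B}=\{k/(n+1):k=1,\dots,n+1\}$. For $a\in\mathcal{A}$, the length of the conformal set is $\mathrm{Leb}(C_a)=2s_{(\lceil (n+1)(1-a)\rceil)}$ (so $\mathrm{Leb}(C_0)=2L$ and $\mathrm{Leb}(C_1)=0$). The vector payoff is $m:\mathcal{A}\times\mathcal{B}\to\mathbb{R}^2$, $m(a,b)=(\mathbf{1}_{b\le a},\ \mathrm{Leb}(C_a))$, extended bilinearly to mixed actions by $m(\boldsymbol{p},\boldsymbol{q})=\sum_{a,b}p_aq_b\,m(a,b)$ for $\boldsymbol p\in\Delta(\mathcal{A})$, $\boldsymbol q\in\Delta(\mathcal{B})$. Repeated game: at each round $t\ge1$ the learner chooses $\boldsymbol p_t\in\Delta(\mathcal{A})$ and the opponent chooses $\boldsymbol q_t\in\Delta(\mathcal{B})$, both as functions of the past history; then $a_t\sim\boldsymbol p_t$ and $b_t\sim\boldsymbol q_t$ are drawn independently given the past. Write $\overline m_T=\frac1T\sum_{t=1}^T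 m(a_t,b_t)$, and $d(x,S)=\min_{c\in S}\|x-c\|$ for the Euclidean norm. *)

(* Defs.v *)
From HB Require Import structures.
From mathcomp Require Import all_boot all_order all_algebra.
From mathcomp Require Import all_classical all_reals all_analysis.
Set Implicit Arguments. Unset Strict Implicit. Unset Printing Implicit Defensive.
Import Order.TTheory GRing.Theory Num.Theory.
Import numFieldNormedType.Exports.
Local Open Scope classical_set_scope.
Local Open Scope ring_scope.

(* Learner actions: k : 'I_(n+2) stands for a = k/(n+1)  (the set A).
   Opponent actions: j : 'I_(n+1) stands for b = (j+1)/(n+1) (the set B). *)
Definition Aact (n : nat) := 'I_n.+2.
Definition Bact (n : nat) := 'I_n.+1.

Definition aval {R : realType} (n : nat) (k : 'I_n.+2) : R := k%:R / n.+1%:R.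
Definition bval {R : realType} (n : nat) (j : 'I_n.+1) : R := j.+1%:R / n.+1%:R.

(* Extended order statistics s_(0) = 0, s_(n+1) = L, s_(1..n) the scores. *)
Definition sorted_scores {R : realType} (n : nat) (L : R) (s : nat -> R) : Prop :=
  [/\ s 0%N = 0, s n.+1 = L,
      (forall k, (1 <= k <= n)%N -> 0 <= s k /\ s k < L)
    & (forall k, (1 <= k < n)%N -> s k < s k.+1)].

(* Leb(C_a) = 2 s_(ceil((n+1)(1-a))); for a = k/(n+1), (n+1)(1-a) = n+1-k. *)
Definition lebC {R : realType} (n : nat) (s : nat -> R) (k : 'I_n.+2) : R :=
  2 * s (n.+1 - k)%N.

Definition payoff {R : realType} (n : nat) (s : nat -> R)
  (k : 'I_n.+2) (j : 'I_n.+1) : R * R :=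
  (((@bval R n j <= @aval R n k)%R : bool)%:R, lebC s k).

Definition is_dist {R : realType} (X : finType) (p : {ffun X -> R}) : Prop :=
  (forall x, 0 <= p x) /\ \sum_(x : X) p x = 1.

Definition history (n : nat) := seq ('I_n.+2 * 'I_n.+1).

Definition lstrategy (R : realType) (n : nat) := history n -> {ffun 'I_n.+2 -> R}.
Definition ostrategy (R : realType) (n : nat) := history n -> {ffun 'I_n.+1 -> R}.

Definition valid_lstrat {R : realType} n (sg : lstrategy R n) : Prop :=
  forall h, is_dist (sg h).
Definition valid_ostrat {R : realType} n (tau : ostrategy R n) : Prop :=
  forall h, is_dist (tau h).

Definition hist_at {T : Type} n (a : nat -> T -> 'I_n.+2) (b : nat -> T -> 'I_n.+1)
  (t : nat) (w : T) : history n :=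
  [seq (a i w, b i w) | i <- iota 0 t].

(* The random play (a_t, b_t) follows the repeated game with strategies sg, tau:
   given the past history h, a_t ~ sg h and b_t ~ tau h independently. *)
Definition plays_according {R : realType} {d : measure_display}
  {T : measurableType d} (P : probability T R) n
  (sg : lstrategy R n) (tau : ostrategy R n)
  (a : nat -> T -> 'I_n.+2) (b : nat -> T -> 'I_n.+1) : Prop :=
  [/\ (forall t x, measurable (a t @^-1` [set x])),
      (forall t y, measurable (b t @^-1` [set y]))
    & (forall t (h : history n) x y, size h = t ->
        P [set w | hist_at a b t w = h /\ a t w = x /\ b t w = y] =
        (P [set w | hist_at a b t w = h] * (sg h x * tau h y)%:E)%E)].

Definition avg_payoff {R : realType} {T : Type} n (s : nat -> R)
  (a : nat -> T -> 'I_n.+2) (b : nat -> T -> 'I_n.+1) (w : T) (N : nat) : R * R :=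
  (N%:R^-1 * \sum_(t < N) (payoff s (a t w) (b t w)).1,
   N%:R^-1 * \sum_(t < N) (payoff s (a t w) (b t w)).2).

Definition dist2 {R : realType} (x : R * R) (S : set (R * R)) : R :=
  inf [set Num.sqrt ((x.1 - y.1) ^+ 2 + (x.2 - y.2) ^+ 2) | y in S].

Definition target_set {R : realType} (L alpha : R) : set (R * R) :=
  [set x | [/\ 0 <= x.1 <= 1, 0 <= x.2 <= 2 * L, x.1 <= alpha
           & x.2 <= 2 * L * (1 - alpha)]].

(* Main.v *)
Require Import Defs.
From HB Require Import structures.
From mathcomp Require Import all_boot all_order all_algebra.
From mathcomp Require Import all_classical all_reals all_analysis.
From mathcomp Require Import ring lra.
Import Order.TTheory GRing.Theory Num.Theory.
Import numFieldNormedType.Exports.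
Local Open Scope classical_set_scope.
Local Open Scope ring_scope.

Section Aux.
Variable R : realType.
Variable al : R.

Fixpoint cnt (t : nat) : nat :=
  if t is t'.+1 then
    (if (cnt t').+1%:R <= al * t%:R then (cnt t').+1 else cnt t')
  else 0%N.

Lemma cnt_inv (t : nat) : 0 <= al -> al <= 1 ->
  (cnt t)%:R <= al * t%:R < (cnt t).+1%:R.
Proof.
move=> a0 a1; elim: t => [|t IH] /=; first by rewrite mulr0 lexx ltr01.
move: IH; set c := cnt t => /andP[h1 h2].
rewrite !mulrSr in h2 *.
case: ifP; rewrite ?mulrSr => h3.
  by apply/andP; split => //; lra.
move/negbT: h3; rewrite -ltNge => h3.
apply/andP; split => //; nra.
Qed.

Definition ebit (t : nat) : R := ((cnt t.+1 == (cnt t).+1) : bool)%:R.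

Lemma sum_ebit N : \sum_(t < N) ebit t = (cnt N)%:R.
Proof.
elim: N => [|N IH]; first by rewrite big_ord0.
rewrite big_ord_recr /= IH /ebit /=.
case: ifP => _.
  by rewrite eqxx [RHS]mulrSr.
by rewrite ltn_eqF /= ?addr0.
Qed.

End Aux.
Arguments cnt {R} al t.
Arguments ebit {R} al t.
Arguments sum_ebit {R} al N.
Arguments cnt_inv {R} al t.

Definition pk {R : realType} (al : R) (n t : nat) : 'I_n.+2 :=
  if cnt al t.+1 == (cnt al t).+1 then ord_max else ord0.

Definition sgy {R : realType} (al : R) (n : nat) : lstrategy R n :=
  fun h => [ffun k => ((k == pk al n (size h)) : bool)%:R].

Lemma sgy_valid {R : realType} (al : R) n : valid_lstrat (sgy al n).
Proof.
move=> h; split=> [x|]; first by rewrite ffunE ler0n.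
rewrite (bigD1 (pk al n (size h))) //= ffunE eqxx big1 ?addr0 // => i /negbTE hi.
by rewrite ffunE hi.
Qed.

Lemma pay1 {R : realType} (al : R) n (s : nat -> R) t j :
  (payoff s (pk al n t) j).1 = ebit al t.
Proof.
rewrite /payoff /pk /ebit /=; case: ifP => _ /=.
  have -> : @aval R n ord_max = 1 by rewrite /aval divff // pnatr_eq0.
  by rewrite /bval ler_pdivrMr ?ltr0Sn // mul1r ler_nat ltn_ord.
have -> : @aval R n ord0 = 0 by rewrite /aval mul0r.
by rewrite /bval lt_geF // divr_gt0 ?ltr0Sn.
Qed.

Lemma pay2 {R : realType} (al : R) n (s : nat -> R) L t j :
  s 0%N = 0 -> s n.+1 = L ->
  (payoff s (pk al n t) j).2 = 2 * L * (1 - ebit al t).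
Proof.
move=> s0 sL; rewrite /payoff /pk /ebit /lebC /=; case: ifP => _ /=.
  by rewrite subnn s0 subrr !mulr0.
by rewrite subn0 sL subr0 mulr1.
Qed.

Lemma hist_atS {T : Type} n (a : nat -> T -> 'I_n.+2) (b : nat -> T -> 'I_n.+1) t w :
  hist_at a b t.+1 w = rcons (hist_at a b t w) (a t w, b t w).
Proof. by rewrite /hist_at -(addn1 t) iotaD map_cat cats1 add0n. Qed.

Lemma hist_meas {d : measure_display} {T : measurableType d} n
  (a : nat -> T -> 'I_n.+2) (b : nat -> T -> 'I_n.+1) :
  (forall t x, measurable (a t @^-1` [set x])) ->
  (forall t y, measurable (b t @^-1` [set y])) ->
  forall t (h : history n), measurable [set w | hist_at a b t w = h].
Proof.
move=> ma mb; elim=> [|t IH] h.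
  case: h => [|z h].
    by have -> : [set w | hist_at a b 0 w = [::]] = setT by apply/seteqP; split.
  by have -> : [set w | hist_at a b 0 w = z :: h] = set0 by apply/seteqP; split.
case/lastP: h => [|h [x y]].
  have -> : [set w | hist_at a b t.+1 w = [::]] = set0; last by [].
  by apply/seteqP; split => w //=.
have -> : [set w | hist_at a b t.+1 w = rcons h (x, y)] =
  [set w | hist_at a b t w = h] `&` (a t @^-1` [set x] `&` b t @^-1` [set y]).
  apply/seteqP; split => w /=; rewrite hist_atS.
    by move/eqP; rewrite eqseq_rcons => /andP[/eqP -> /eqP [-> ->]].
  by move=> [-> [-> ->]].
by apply: measurableI => //; apply: measurableI.
Qed.

Lemma ae_pk {R : realType} (al : R) n (tau : ostrategy R n)
  {d : measure_display} {T : measurableType d} (P : probability T R)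
  (a : nat -> T -> 'I_n.+2) (b : nat -> T -> 'I_n.+1) :
  plays_according P (sgy al n) tau a b ->
  forall t, {ae P, forall w, a t w = pk al n t}.
Proof.
move=> [ma mb hP] t.
pose U := (seq ('I_n.+2 * 'I_n.+1) * ('I_n.+2 * 'I_n.+1))%type.
pose F := fun k : nat => match @unpickle U k with
  | Some (h, (x, y)) =>
    if (size h == t) && (x != pk al n t) then
      [set w | hist_at a b t w = h /\ a t w = x /\ b t w = y] else set0
  | None => set0 end.
have Fneg : forall k, P.-negligible (F k).
  move=> k; rewrite /F; case: unpickle => [[h [x y]]|]; last exact: negligible_set0.
  case: ifP => [/andP[/eqP sz xne]|_]; last exact: negligible_set0.
  have mE : measurable [set w | hist_at a b t w = h /\ a t w = x /\ b t w = y].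
    have -> : [set w | hist_at a b t w = h /\ a t w = x /\ b t w = y] =
      [set w | hist_at a b t w = h] `&` (a t @^-1` [set x] `&` b t @^-1` [set y]).
      by apply/seteqP; split => w /=.
    apply: measurableI; first exact: hist_meas.
    by apply: measurableI.
  apply/negligibleP => //.
  apply: (eq_trans (hP t h x y sz)).
  by rewrite /sgy ffunE sz (negbTE xne) mul0r mule0.
apply: (negligibleS _ (negligible_bigcup Fneg)).
move=> w /= hne; exists (pickle ((hist_at a b t w, (a t w, b t w)) : U)) => //.
rewrite /F pickleK size_map size_iota eqxx /=.
have -> : (a t w != pk al n t) by apply/eqP.
by [].
Qed.

Lemma avg_eq {R : realType} (al : R) n (s : nat -> R) L {T : Type}
  (a : nat -> T -> 'I_n.+2) (b : nat -> T -> 'I_n.+1) w N :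
  s 0%N = 0 -> s n.+1 = L -> (forall t, a t w = pk al n t) ->
  avg_payoff s a b w N =
  (N%:R^-1 * (cnt al N)%:R, N%:R^-1 * (2 * L * (N%:R - (cnt al N)%:R))).
Proof.
move=> s0 sL Hw; rewrite /avg_payoff; congr pair.
  by under eq_bigr => i _ do rewrite Hw pay1; rewrite sum_ebit.
under eq_bigr => i _ do rewrite Hw (pay2 _ _ _ _ _ _ s0 sL).
by rewrite -mulr_sumr sumrB sumr_const card_ord sum_ebit.
Qed.

Lemma dist_bound {R : realType} (L al : R) (N c : nat) :
  0 < L -> 0 <= al <= 1 -> (0 < N)%N ->
  c%:R <= al * N%:R < c.+1%:R ->
  0 <= dist2 (N%:R^-1 * c%:R, N%:R^-1 * (2 * L * (N%:R - c%:R))) (target_set L al)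
  <= 2 * L * N%:R^-1.
Proof.
move=> L0 /andP[a0 a1] N0 /andP[c1 c2].
set q := N%:R^-1.
have qN : q * N%:R = 1 by rewrite mulVf // pnatr_eq0 -lt0n.
have q0 : 0 < q by rewrite invr_gt0 ltr0n.
rewrite /dist2; set E := (X in inf X).
have lb : lbound E 0 by move=> _ [y _ <-]; exact: sqrtr_ge0.
set y := (q * c%:R, 2 * L * (1 - al)).
have yS : target_set L al y.
  rewrite /target_set /y /=; rewrite mulrSr in c2.
  split.
  - apply/andP; split; first by rewrite mulr_ge0 ?ler0n // ltW.
    nra.
  - apply/andP; split; nra.
  - nra.
  - lra.
have Ey : E (`| q * (2 * L * (N%:R - c%:R)) - 2 * L * (1 - al)|).
  exists y => //=.
  by rewrite subrr expr0n /= add0r sqrtr_sqr.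
apply/andP; split.
  by apply: lb_le_inf => //; exists (`| q * (2 * L * (N%:R - c%:R)) - 2 * L * (1 - al)|).
apply: le_trans (ge_inf _ Ey) _; first by exists 0.
have -> : q * (2 * L * (N%:R - c%:R)) - 2 * L * (1 - al) = 2 * L * q * (al * N%:R - c%:R).
  have e1 : q * (2 * L * (N%:R - c%:R)) - 2 * L * (1 - al) = 2*L*(q*N%:R) - 2*L*q*c%:R - 2*L*(1-al) by ring.
  have e2 : 2 * L * q * (al * N%:R - c%:R) = 2*L*al*(q*N%:R) - 2*L*q*c%:R by ring.
  by rewrite e1 e2 qN; ring.
rewrite normrM ger0_norm ?mulr_ge0 ?ler0n // ?ltW //.
rewrite ger0_norm ?subr_ge0 //.
rewrite mulrSr in c2.
rewrite -[X in _ < X]mulr1 ltr_pM2l ?mulr_gt0 //; lra.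
Qed.

Theorem lemma3 (R : realType) (n : nat) (L : R) (s : nat -> R) (alpha : R) :
  (1 <= n)%N -> 0 < L -> sorted_scores n L s ->
  0 <= alpha <= 1 ->
  exists sg : lstrategy R n, valid_lstrat sg /\
    forall (tau : ostrategy R n), valid_ostrat tau ->
    forall (d : measure_display) (T : measurableType d) (P : probability T R)
           (a : nat -> T -> 'I_n.+2) (b : nat -> T -> 'I_n.+1),
      plays_according P sg tau a b ->
      {ae P, forall w,
        (fun N : nat => dist2 (avg_payoff s a b w N) (target_set L alpha))
          @ \oo --> (0 : R)}.
Proof.
move=> _ L0 [s0 sL _ _] /andP[a0 a1].
exists (sgy alpha n); split; first exact: sgy_valid.
move=> tau _ d T P a b hP.
have := ae_foralln (@ae_pk R alpha n tau d T P a b hP).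
apply: filterS => w Hw.
apply: (@squeeze_cvgr _ _ _ _ (fun _ => 0) (fun N => 4 * L * harmonic N)).
- near=> N.
  have N0 : (0 < N)%N by near: N; exists 1%N.
  rewrite (@avg_eq R alpha n s L T a b w N s0 sL Hw).
  have /andP[-> h2] := @dist_bound R L alpha N (cnt alpha N) L0 (introT andP (conj a0 a1)) N0 (cnt_inv alpha N a0 a1).
  apply: (le_trans h2) => /=.
  have h : N%:R^-1 <= 2 * N.+1%:R^-1 :> R.
    rewrite -[N%:R^-1]mul1r ler_pdivrMr ?ltr0n // mulrAC ler_pdivlMr ?ltr0n // mul1r.
    by rewrite -natrM ler_nat mul2n -addnn -addn1 leq_add2l.
  have -> : 4 * L / N.+1%:R = 2 * L * (2 * N.+1%:R^-1) by ring.
  by rewrite ler_pM2l ?mulr_gt0.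
- exact: cvg_cst.
- have := cvgM (cvg_cst (4 * L)) (@cvg_harmonic R).
  by rewrite mulr0; apply.
Unshelve. all: by end_near.
Qed.
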